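(* Let $k$ be a positive integer. If $T$ is a semi-complete digraph with $n$ vertices that admits an ordering of cost at most $k$, then the number of $(4k)^{2/3}$-cuts of $T$ is at most $$A\cdot\exp\Bigl(2C\,(4k)^{1/3}\sqrt{1+\ln\bigl(2(4k)^{2/3}\bigr)}\Bigr)\cdot(n+1),$$ where $C=\pi\sqrt{2/3}$ and $A$ is a constant such that $p(m)\le\frac{A}{m+1}\exp(C\sqrt{m})$ for all integers $m\ge0$.
   Context: A simple digraph (no loops, no multiple arcs) $T$ is semi-complete if for every pair of distinct vertices $v,w$ at least one of $(v,w),(w,v)$ is an arc. The cost of an ordering $(v_1,\dots,v_n)$ of $V(T)$ is $\sum_{(v_i,v_j)\in E(T),\,i>j}(i-j)$. For real $d\ge 0$, a $d$-cut of a digraph $T$ is an ordered partition $(X,Y)$ of $V(T)$ (either part may be empty) such that there are at most $d$ arcs $(u,v)\in E(T)$ with $u\in Y$ and $v\in X$. $p(m)$ denotes the number of partitions of the integer $m$; such $A$ exists by the Hardy–Ramanujan estimate. *)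

(* Defs.v *)
From Stdlib Require Import Reals.
From mathcomp Require Import all_boot fingroup perm.
Set Implicit Arguments. Unset Strict Implicit. Unset Printing Implicit Defensive.

(* A digraph on vertex set 'I_n is given by its arc relation T : rel 'I_n
   ((u,v) is an arc iff T u v). Multiple arcs are excluded by construction. *)

Definition loopless (n : nat) (T : rel 'I_n) : Prop := forall v, ~~ T v v.

Definition semi_complete (n : nat) (T : rel 'I_n) : Prop :=
  forall v w : 'I_n, v != w -> T v w || T w v.

(* An ordering (v_1,...,v_n) is a bijection s : positions -> vertices,
   v_{i+1} = s i.  Cost = sum over arcs (v_i,v_j) with i > j of (i - j). *)
Definition cost (n : nat) (T : rel 'I_n) (s : {perm 'I_n}) : nat :=
  \sum_(i < n) \sum_(j < n | (j < i) && T (s i) (s j)) (i - j).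

Definition back_arcs (n : nat) (T : rel 'I_n) (X : {set 'I_n}) : nat :=
  #|[set uv : 'I_n * 'I_n | [&& uv.1 \notin X, uv.2 \in X & T uv.1 uv.2]]|.

Definition is_dcut (n : nat) (T : rel 'I_n) (d : R) (X : {set 'I_n}) : Prop :=
  Rle (INR (back_arcs T X)) d.

(* number of d-cuts: ordered partitions (X,Y) are determined by X *)
Definition num_dcuts (n : nat) (T : rel 'I_n) (d : R) : nat :=
  #|[set X : {set 'I_n} | if Rle_dec (INR (back_arcs T X)) d then true else false]|.

(* p(m): number of partitions of m, counted via multiplicity vectors:
   c i = number of parts equal to i+1, with sum (i+1) * c i = m.
   (each c i <= m, so 'I_(m.+1) loses nothing) *)
Definition npartitions (m : nat) : nat :=
  #|[set c : {ffun 'I_m -> 'I_m.+1} | \sum_(i < m) i.+1 * c i == m]|.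

Local Open Scope R_scope.
Definition Cconst : R := PI * sqrt (2 / 3).

Definition cut_bound (A : R) (k n : nat) : R :=
  A * exp (2 * Cconst * Rpower (4 * INR k) (1 / 3)
            * sqrt (1 + ln (2 * Rpower (4 * INR k) (2 / 3))))
     * INR (n + 1).

Definition dthr (k : nat) : R := Rpower (4 * INR k) (2 / 3).

Definition HR_constant (A : R) : Prop :=
  forall m : nat, INR (npartitions m) <= A / INR (m + 1) * exp (Cconst * sqrt (INR m)).

(* Main.v *)
Require Import Defs.
From Stdlib Require Import Reals Lra Psatz ZArith.
From mathcomp Require Import all_boot fingroup perm.
Set Implicit Arguments. Unset Strict Implicit. Unset Printing Implicit Defensive.

Section Comb.
Variable n : nat.
Variable s : {perm 'I_n}.

Definition ycnt (X : {set 'I_n}) (p : 'I_n) :=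
  #|[set q : 'I_n | (q < p) && (s q \notin X)]|.
Definition Iv (X : {set 'I_n}) := \sum_(p | s p \in X) ycnt X p.
Definition cntv (X : {set 'I_n}) v := #|[set p : 'I_n | (s p \in X) && (ycnt X p == v)]|.

Lemma ycnt_eq (X X' : {set 'I_n}) (p : 'I_n) :
  (forall q : 'I_n, q < p -> (s q \in X) = (s q \in X')) -> ycnt X p = ycnt X' p.
Proof.
move=> H; rewrite /ycnt; apply: eq_card => q; rewrite !inE.
by case hq: (q < p) => //=; rewrite H.
Qed.

Lemma ycnt_lt (X : {set 'I_n}) (p q : 'I_n) : p < q -> s p \notin X -> (ycnt X p).+1 <= ycnt X q.
Proof.
move=> hpq hp; apply: proper_card; apply/properP; split.
  apply/subsetP => r; rewrite !inE => /andP[hr ->]; by rewrite (ltn_trans hr hpq).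
exists p; first by rewrite inE hpq hp.
by rewrite inE ltnn.
Qed.

Lemma key_diff (X X' : {set 'I_n}) (p : 'I_n) :
  (forall q : 'I_n, q < p -> (s q \in X) = (s q \in X')) ->
  s p \in X -> s p \notin X' -> cntv X' (ycnt X p) < cntv X (ycnt X p).
Proof.
move=> H hX hX'; apply: proper_card; apply/properP; split.
  apply/subsetP => q; rewrite !inE => /andP[hq /eqP hv].
  case: (ltngtP q p) => hqp.
  - rewrite H // hq /=; rewrite (ycnt_eq (X:=X) (X':=X') (p:=q)) ?hv //.
    by move=> r hr; apply: H; apply: ltn_trans hr hqp.
  - have := ycnt_lt hqp hX'; rewrite hv (ycnt_eq (X:=X) (X':=X') (p:=p)) //.
    by rewrite ltnn.
  - have eqp : q = p by apply: val_inj.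
    by move: hq; rewrite eqp (negbTE hX').
exists p; first by rewrite inE hX eqxx.
by rewrite inE (negbTE hX').
Qed.

Lemma cntv_inj (X X' : {set 'I_n}) : (forall v, cntv X v = cntv X' v) -> X = X'.
Proof.
move=> Hc.
case: (pickP [pred p | (s p \in X) != (s p \in X')]) => [p0 hp0|hnone]; last first.
  apply/setP => x; have := hnone (s^-1 x)%g; rewrite /= permKV.
  by move/negbT; rewrite negbK => /eqP.
case: (arg_minnP (fun p : 'I_n => (p : nat)) hp0) => p hp hmin.
have Hq : forall q : 'I_n, q < p -> (s q \in X) = (s q \in X').
  move=> q hq; apply/eqP; apply: contraTT hq => hq; rewrite -leqNgt; exact: hmin.
move: hp; rewrite /=; case hpX: (s p \in X); case hpX': (s p \in X') => //= _.
- have := key_diff Hq hpX (negbT hpX'); by rewrite Hc ltnn.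
- have Hq' : forall q : 'I_n, q < p -> (s q \in X') = (s q \in X).
    by move=> q hq; rewrite Hq.
  have := key_diff Hq' hpX' (negbT hpX); by rewrite Hc ltnn.
Qed.

Lemma card_set_sum (X : {set 'I_n}) (Q : pred 'I_n) :
  #|[set p : 'I_n | (s p \in X) && Q p]| = \sum_(p | s p \in X) (Q p : nat).
Proof.
rewrite -sum1_card big_mkcond [RHS]big_mkcond; apply: eq_bigr => p _.
by rewrite inE; case: (s p \in X); case: (Q p).
Qed.

Lemma sumv (N x : nat) : x < N -> \sum_(v < N) v * (x == v) = x.
Proof.
elim: N => [//|N IH] hx.
rewrite big_ord_recr /=; case: (ltngtP x N) => h.
- by rewrite IH // muln0 addn0.
- by move: hx; rewrite ltnS leqNgt h.
- rewrite h muln1 big1 ?add0n // => v _.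
  by rewrite (gtn_eqF (ltn_ord v)) muln0.
Qed.

Lemma ycnt_le_Iv (X : {set 'I_n}) p : s p \in X -> ycnt X p <= Iv X.
Proof. by move=> h; rewrite /Iv (bigD1 p) //= leq_addr. Qed.

Lemma cntv_le (X : {set 'I_n}) v : 0 < v -> cntv X v <= Iv X.
Proof.
move=> hv; rewrite /cntv card_set_sum /Iv; apply: leq_sum => p _.
case: eqP => [->|]; by rewrite ?leq0n.
Qed.

Lemma sum_cntv (X : {set 'I_n}) N :
  (forall p, s p \in X -> ycnt X p < N) ->
  \sum_(v < N) v * cntv X v = Iv X.
Proof.
move=> H.
rewrite (eq_bigr (fun v : 'I_N => \sum_(p | s p \in X) v * (ycnt X p == v))); last first.
  by move=> v _; rewrite /cntv card_set_sum big_distrr.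
rewrite exchange_big /Iv; apply: eq_bigr => p hp; exact: sumv (H p hp).
Qed.

Definition enc (m : nat) (X : {set 'I_n}) : {ffun 'I_m -> 'I_m.+1} :=
  [ffun i : 'I_m => inord (cntv X i.+1)].

Lemma enc_in m (X : {set 'I_n}) : Iv X = m ->
  enc m X \in [set c : {ffun 'I_m -> 'I_m.+1} | \sum_(i < m) i.+1 * c i == m].
Proof.
move=> hm; rewrite inE.
rewrite (eq_bigr (fun i : 'I_m => i.+1 * cntv X i.+1)); last first.
  move=> i _; rewrite ffunE inordK // ltnS; apply: (leq_trans (cntv_le X (ltn0Sn i))); by rewrite hm.
have := sum_cntv (N := m.+1) (X := X).
rewrite big_ord_recl /= mul0n add0n => ->; first by rewrite hm.
move=> p hp; rewrite ltnS -hm; exact: ycnt_le_Iv.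
Qed.

Lemma cntv_big (X : {set 'I_n}) v : Iv X < v -> cntv X v = 0.
Proof.
move=> hv; apply/eqP; rewrite cards_eq0; apply/eqP/setP => p; rewrite !inE.
case hp: (s p \in X) => //=; apply/negbTE; rewrite neq_ltn.
by rewrite (leq_ltn_trans (ycnt_le_Iv hp) hv).
Qed.

Lemma enc_inj m (X X' : {set 'I_n}) : Iv X = m -> Iv X' = m ->
  cntv X 0 = cntv X' 0 -> enc m X = enc m X' -> X = X'.
Proof.
move=> h1 h2 h0 he; apply: cntv_inj => v.
case: v => [//|v].
case: (ltnP v m) => hv.
  have := congr1 (fun f : {ffun 'I_m -> 'I_m.+1} => (f (Ordinal hv) : nat)) he.
  rewrite !ffunE /= !inordK // ltnS; [apply: (leq_trans (cntv_le X' (ltn0Sn v))); by rewrite h2 | apply: (leq_trans (cntv_le X (ltn0Sn v))); by rewrite h1].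
by rewrite !cntv_big // ?h1 ?h2 ltnS.
Qed.

Lemma count_fiber (S : {set {set 'I_n}}) a m :
  #|[set X in S | (cntv X 0 == a) && (Iv X == m)]| <= npartitions m.
Proof.
set D := [set X in S | _].
rewrite /npartitions -(card_in_imset (f := enc m)).
  apply: subset_leq_card; apply/subsetP => c /imsetP[X hX ->].
  move: hX; rewrite /D !inE => /and3P[_ _ /eqP hm]; have := enc_in hm; by rewrite inE.
move=> X X'; rewrite /D !inE => /and3P[_ /eqP ha /eqP hm] /and3P[_ /eqP ha' /eqP hm'].
apply: enc_inj; by [rewrite hm | rewrite hm' | rewrite ha ha'].
Qed.
End Comb.


Section Inv.
Variable n : nat.
Variable s : {perm 'I_n}.
Variable T : rel 'I_n.
Variable X : {set 'I_n}.

Definition invs : {set 'I_n * 'I_n} :=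
  [set pq : 'I_n * 'I_n | [&& pq.1 < pq.2, s pq.1 \notin X & s pq.2 \in X]].
Definition dist (pq : 'I_n * 'I_n) := pq.2 - pq.1.
Definition cutset := [set pq in invs | T (s pq.1) (s pq.2)].
Definition ncset := [set pq in invs | ~~ T (s pq.1) (s pq.2)].
Definition farset h := [set pq in invs | ~~ T (s pq.1) (s pq.2) && (h < dist pq)].
Definition Sset l := [set pq in invs | dist pq == l].

Lemma card_in_sum (U : finType) (B : {set U}) (Q : pred U) :
  #|[set x in B | Q x]| = \sum_(x in B) (Q x : nat).
Proof.
rewrite -sum1_card big_mkcond [RHS]big_mkcond; apply: eq_bigr => x _.
by rewrite inE; case: (x \in B); case: (Q x).
Qed.

Lemma invs_card : #|invs| = Iv s X.
Proof.
rewrite -sum1_card big_mkcond /=.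
have -> : \sum_(pq : 'I_n * 'I_n) (if pq \in invs then 1 else 0) =
   \sum_(i : 'I_n) \sum_(j : 'I_n) (if (i, j) \in invs then 1 else 0).
  by rewrite pair_bigA; apply: eq_bigr => -[i j].
rewrite exchange_big /Iv [RHS]big_mkcond; apply: eq_bigr => p _.
rewrite /ycnt -sum1_card.
case hp: (s p \in X).
  by rewrite [RHS]big_mkcond; apply: eq_bigr => q _; rewrite !inE /= hp andbT.
by rewrite big1 // => q _; rewrite !inE /= hp !andbF.
Qed.

Lemma cut_le : #|cutset| <= back_arcs T X.
Proof.
rewrite /back_arcs -[#|cutset|](card_in_imset (f := fun pq : 'I_n * 'I_n => (s pq.1, s pq.2))).
  apply: subset_leq_card; apply/subsetP => uv /imsetP[pq hpq ->].
  by move: hpq; rewrite !inE /= => /andP[/and3P[_ -> ->] ->].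
move=> [a b] [c d] _ _ /= [] /perm_inj -> /perm_inj -> //.
Qed.

Lemma nc_cost : semi_complete T ->
  \sum_(pq in ncset) dist pq <= cost T s.
Proof.
move=> hsc; rewrite big_mkcond /=.
have -> : \sum_(pq : 'I_n * 'I_n) (if pq \in ncset then dist pq else 0) =
   \sum_(i : 'I_n) \sum_(j : 'I_n) (if (i, j) \in ncset then dist (i, j) else 0).
  by rewrite pair_bigA; apply: eq_bigr => -[i j].
rewrite exchange_big /cost; apply: leq_sum => i _.
rewrite [X in _ <= X]big_mkcond; apply: leq_sum => j _.
rewrite !inE /=.
case hj: (j < i) => //=; case hjX: (s j \in X) => //=; case hiX: (s i \in X) => //=.
case hT: (T (s j) (s i)) => //=.
have hne : s j != s i.
  apply/eqP => /perm_inj e; by move: hj; rewrite e ltnn.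
have := hsc _ _ hne; rewrite hT /= => ->; by rewrite /dist.
Qed.

Lemma far_le h : #|farset h| * h.+1 <= \sum_(pq in ncset) dist pq.
Proof.
rewrite -sum_nat_const big_mkcond [X in _ <= X]big_mkcond /=.
apply: leq_sum => pq _; rewrite /farset /ncset !inE.
by case: ifP => // /and3P[-> -> hd].
Qed.

Lemma S_dist l pq : pq \in Sset l -> (pq.2 : nat) = pq.1 + l.
Proof.
rewrite !inE /dist => /andP[/and3P[h _ _] /eqP <-]; by rewrite subnKC // ltnW.
Qed.

Lemma S_sq l : #|Sset l| * #|Sset l| <= 2 * #|invs|.
Proof.
pose g (pp : ('I_n * 'I_n) * ('I_n * 'I_n)) :=
  if pp.1.1 <= pp.2.1 then ((pp.1.1, pp.2.2), true) else ((pp.2.1, pp.1.2), false).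
rewrite -cardsX mulnC -[2]card_bool -cardsT -cardsX.
rewrite -(card_in_imset (f := g)).
  apply: subset_leq_card; apply/subsetP => z /imsetP[[p q] hpq ->].
  move: hpq; rewrite !inE /= => /andP[/andP[/and3P[h1 h2 h3] _] /andP[/and3P[h4 h5 h6] _]].
  rewrite /g /=; case: (leqP p.1 q.1) => hle /=; rewrite ?andbT.
    by rewrite h2 h6 (leq_ltn_trans hle h4).
  by rewrite h5 h3 (ltn_trans hle h1).
move=> [p q] [p' q']; rewrite !in_setX /= => /andP[hp hq] /andP[hp' hq'].
have e1 := S_dist hp; have e2 := S_dist hq; have e3 := S_dist hp'; have e4 := S_dist hq'.
move: p q p' q' hp hq hp' hq' e1 e2 e3 e4 => [a b] [c d] [a' b'] [c' d'] /= _ _ _ _ e1 e2 e3 e4.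
rewrite /g /=; case: leqP => h1; case: leqP => h2 //= [E1 E2].
- move: E1 E2 e3 e4 => <- <- e3 e4.
  have Eb : b = b' by apply: ord_inj; rewrite e1 e3.
  have Ec : c = c' by apply: ord_inj; apply/eqP; rewrite -(eqn_add2r l) -e2 -e4.
  by rewrite Eb Ec.
- move: E1 E2 e4 e3 => <- <- e4 e3.
  have Ed : d = d' by apply: ord_inj; rewrite e2 e4.
  have Ea : a = a' by apply: ord_inj; apply/eqP; rewrite -(eqn_add2r l) -e1 -e3.
  by rewrite Ea Ed.
Qed.

Lemma S0 : #|Sset 0| = 0.
Proof.
apply/eqP; rewrite cards_eq0; apply/eqP/setP => pq; rewrite !inE /dist.
apply/negP => /andP[/and3P[h _ _]]; by rewrite subn_eq0 leqNgt h.
Qed.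

Lemma invs_split h :
  #|invs| <= #|cutset| + \sum_(l < h.+1) #|Sset l| + #|farset h|.
Proof.
rewrite /cutset /farset /Sset !card_in_sum -sum1_card.
rewrite (eq_bigr (fun l : 'I_h.+1 => \sum_(x in invs) ((dist x == l) : nat))); last by move=> l _; rewrite card_in_sum.
rewrite exchange_big -!big_split /=.
apply: leq_sum => pq _.
case hT: (T _ _) => //=.
case: (leqP (dist pq) h) => hd; last by rewrite addn1.
rewrite (bigD1 (Ordinal (hd : dist pq < h.+1))) //= eqxx.
by rewrite add0n -addnA leq_addr.
Qed.
End Inv.


Lemma inv_bound n (s : {perm 'I_n}) (T : rel 'I_n) (X : {set 'I_n}) h :
  semi_complete T ->
  exists r D F, [/\ r * r <= 2 * Iv s X, Iv s X <= D + h * r + F,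
     F * h.+1 <= cost T s & D <= back_arcs T X].
Proof.
move=> hsc.
exists (\max_(l < h.+1) #|Sset s X l|), #|cutset s T X|, #|farset s T X h|.
split.
- rewrite -invs_card; apply: (big_ind (fun x => x * x <= 2 * #|invs s X|)) => //.
    by move=> x y hx hy; rewrite /maxn; case: ifP.
  by move=> l _; exact: S_sq.
- rewrite -invs_card; apply: (leq_trans (invs_split s T X h)).
  rewrite leq_add2r leq_add2l big_ord_recl S0 add0n.
  apply: (@leq_trans (\sum_(i < h) \max_(l < h.+1) #|Sset s X l|)).
    apply: leq_sum => i _; exact: (leq_bigmax (lift ord0 i)).
  by rewrite sum_nat_const card_ord.
- exact: leq_trans (far_le s T X h) (nc_cost s X hsc).
- exact: cut_le.
Qed.

Lemma count_total n (s : {perm 'I_n}) (S : {set {set 'I_n}}) M :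
  (forall X, X \in S -> Iv s X <= M) ->
  #|S| <= n.+1 * \sum_(m < M.+1) npartitions m.
Proof.
move=> HM.
apply: (@leq_trans (\sum_(X in S) \sum_(a < n.+1) \sum_(m < M.+1)
          ((cntv s X 0 == a) && (Iv s X == m) : nat))).
  rewrite -sum1_card; apply: leq_sum => X hX.
  have ha : cntv s X 0 < n.+1 by rewrite ltnS /cntv; apply: (leq_trans (max_card _)); rewrite card_ord.
  have hm : Iv s X < M.+1 by rewrite ltnS HM.
  rewrite (bigD1 (Ordinal ha)) //= (bigD1 (Ordinal hm)) //= !eqxx /=.
  by rewrite -addnA leq_addr.
rewrite exchange_big /=.
apply: (@leq_trans (\sum_(a < n.+1) \sum_(m < M.+1) npartitions m)); last first.
  by rewrite sum_nat_const card_ord.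
apply: leq_sum => a _; rewrite exchange_big /=; apply: leq_sum => m _.
rewrite -card_in_sum; exact: count_fiber.
Qed.

Section RealPart.
Local Open Scope R_scope.

Lemma Ibound (I D h r F k t : R) :
  0 <= r -> 0 <= h -> 0 <= F -> 0 <= I -> 0 < t -> t * t * t = 4 * k ->
  r * r <= 2 * I -> I <= D + h * r + F -> F * (h + 1) <= k -> D <= t * t ->
  2 * h <= t -> t < 2 * (h + 1) -> I <= 3 * (t * t).
Proof.
intros hr hh hF hI ht ht3 hrI hIs hFk hD hh1 hh2.
assert (hF2 : F * t <= t * t * t / 2) by nra.
assert (hF3 : F <= t * t / 2).
{ apply Rmult_le_reg_r with t; [lra|]. nra. }
assert (hy : h * r <= t / 2 * r) by nra.
assert (hyy : (t / 2 * r) * (t / 2 * r) <= t * t * I / 2) by nra.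
assert (hy0 : 0 <= t / 2 * r) by nra.
generalize dependent (t / 2 * r); intros y hy hyy hy0.
destruct (Rle_dec I (3 * (t * t))) as [hle|hc]; [exact hle|].
exfalso.
assert (h1 : I <= 3 / 2 * (t * t) + y) by lra.
assert (h2 : I / 2 < y) by lra.
assert (h3 : I * I / 4 < y * y) by nra.
nra.
Qed.

Lemma C_ge : 2.4 <= Cconst.
Proof.
unfold Cconst.
assert (hp : 3 < PI) by (generalize PI2_3_2; lra).
assert (hs : 0.8 <= sqrt (2 / 3)).
{ rewrite <- (sqrt_square 0.8) by lra. apply sqrt_le_1_alt. lra. }
nra.
Qed.

Lemma final_ineq (t x : R) : 3 / 2 <= t -> 0 <= x -> x <= 3 * (t * t) ->
  (x + 1) * exp (Cconst * sqrt x) <=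
  exp (2 * Cconst * t * sqrt (1 + ln (2 * (t * t)))).
Proof.
intros ht hx0 hx.
pose proof C_ge as hC.
assert (hln : 1 <= ln (2 * (t * t))).
{ rewrite <- (ln_exp 1). destruct (Req_dec (exp 1) (2 * (t * t))) as [e|ne].
  - rewrite e; lra.
  - apply Rlt_le, ln_increasing; [apply exp_pos|].
    generalize exp_le_3; nra. }
assert (ha : 1.41 <= sqrt (1 + ln (2 * (t * t)))).
{ rewrite <- (sqrt_square 1.41) by lra. apply sqrt_le_1_alt. lra. }
assert (hb0 : 0 <= sqrt x) by apply sqrt_pos.
assert (hbb : sqrt x * sqrt x = x) by (apply sqrt_sqrt; lra).
generalize dependent (sqrt (1 + ln (2 * (t * t)))); intros a ha.
generalize dependent (sqrt x); intros b hb0 hbb.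
assert (hb : b <= 1.74 * t) by nra.
generalize dependent Cconst; intros C hC.
assert (hz : 2.592 * t <= 2 * C * t * a - C * b).
{ assert (hd : 1.08 * t <= 2 * t * a - b) by nra.
  assert (hp : 0 <= (C - 2.4) * (2 * t * a - b)) by (apply Rmult_le_pos; lra).
  nra. }
replace (2 * C * t * a) with ((2 * C * t * a - C * b) + C * b) by ring.
generalize dependent (2 * C * t * a - C * b); intros z hz.
rewrite exp_plus.
apply Rmult_le_compat_r; [apply Rlt_le, exp_pos|].
assert (hw : 0.648 * t <= z / 4) by lra.
assert (hexpw : 1 + z / 4 <= exp (z / 4)) by apply exp_ineq1_le.
assert (hez : exp z = exp (z/4) * exp (z/4) * exp (z/4) * exp (z/4)).
{ rewrite <- !exp_plus. f_equal. lra. }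
rewrite hez.
generalize dependent (z / 4); intros w hw hexpw.
generalize dependent (exp w); intros e he.
assert (h1w : 0 <= 1 + w) by nra.
assert (h2 : (1 + w) * (1 + w) <= e * e) by nra.
assert (hq : (1 + w) * (1 + w) * (1 + w) * (1 + w) <= e * e * e * e) by nra.
assert (hq2 : x + 1 <= (1 + w) * (1 + w) * (1 + w) * (1 + w)) by nra.
lra.
Qed.


Lemma tprops (k : nat) : (0 < k)%N ->
  0 < Rpower (4 * INR k) (1/3) /\
  Rpower (4 * INR k) (1/3) * Rpower (4 * INR k) (1/3) * Rpower (4 * INR k) (1/3) = 4 * INR k /\
  Rpower (4 * INR k) (2/3) = Rpower (4 * INR k) (1/3) * Rpower (4 * INR k) (1/3) /\
  (3/2 <= Rpower (4 * INR k) (1/3)).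
Proof.
move=> hk.
have hk1 : (1 <= INR k) by apply: (le_INR 1); apply/leP.
have hx : (0 < 4 * INR k) by lra.
have ht : (0 < Rpower (4 * INR k) (1/3)) by rewrite /Rpower; apply: exp_pos.
have h3 : (Rpower (4 * INR k) (1/3) * Rpower (4 * INR k) (1/3) * Rpower (4 * INR k) (1/3) = 4 * INR k).
  have := @Rpower_pow 3 _ ht; rewrite Rpower_mult.
  have -> : (1 / 3 * INR 3 = 1) by rewrite /=; field.
  rewrite Rpower_1 // => e; transitivity (Rpower (4 * INR k) (1/3) ^ 3); [simpl; ring | by rewrite -e].
split => //; split => //; split.
  have := @Rpower_pow 2 _ ht; rewrite Rpower_mult.
  have -> : (1 / 3 * INR 2 = 2 / 3) by rewrite /=; field.
  move=> ->; rewrite /=; ring.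
move: h3 ht; set t := Rpower _ _ => h3 ht.
case: (Rle_dec (3/2) t) => // hc; exfalso; nra.
Qed.

Lemma floor_nat (y : R) : (0 <= y) -> exists h : nat, (INR h <= y /\ y < INR h + 1).
Proof.
move=> hy; have [h1 h2] := base_Int_part y.
have hz : (0 <= Int_part y)%Z.
  have : (-1 < IZR (Int_part y)) by lra.
  move/lt_IZR; lia.
exists (Z.to_nat (Int_part y)); rewrite INR_IZR_INZ Z2Nat.id //; lra.
Qed.

Lemma sum_INR_le (N : nat) (f : nat -> nat) (B : R) :
  (forall m, (m < N)%N -> (INR (f m) <= B)) ->
  (INR (\sum_(m < N) f m) <= INR N * B).
Proof.
elim: N => [|N IH] H.
  rewrite big_ord0 /=; lra.
rewrite big_ord_recr plus_INR S_INR /=.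
have h1 := IH (fun m hm => H m (ltnW hm)).
have h2 := H N (ltnSn N).
apply: Rle_trans (Rplus_le_compat _ _ _ _ h1 h2) _; lra.
Qed.

Lemma INR_muln (a b : nat) : INR (a * b)%N = INR a * INR b.
Proof. by rewrite -mult_INR. Qed.
Lemma INR_addn (a b : nat) : INR (a + b)%N = INR a + INR b.
Proof. by rewrite -plus_INR. Qed.
Lemma INR_leq (a b : nat) : (a <= b)%N -> INR a <= INR b.
Proof. by move/leP; apply: le_INR. Qed.
Lemma exp_le_mono x y : x <= y -> exp x <= exp y.
Proof. case/Rle_lt_or_eq_dec => [h|->]; [apply: Rlt_le; exact: exp_increasing | exact: Rle_refl]. Qed.

Lemma main_aux (A : R) (hA : HR_constant A) (k n : nat) (hk : (0 < k)%N)
  (T : rel 'I_n) (hsc : semi_complete T) (s : {perm 'I_n}) (hs : (cost T s <= k)%N) :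
  INR (num_dcuts T (dthr k)) <= cut_bound A k n.
Proof.
have [ht [ht3 [ht2 ht32]]] := tprops hk.
rewrite /cut_bound /dthr ht2 /num_dcuts.
move: ht ht3 ht2 ht32; set t := Rpower (4 * INR k) (1 / 3) => ht ht3 ht2 ht32.
set S := [set X : {set 'I_n} | _].
have HI : forall X, X \in S -> INR (Iv s X) <= 3 * (t * t).
  move=> X; rewrite inE; case: Rle_dec => // hX _.
  have [h [hh1 hh2]] := floor_nat (y := t / 2) ltac:(lra).
  have [r [D [F [h1 h2 h3 h4]]]] := inv_bound s X h hsc.
  have c1 := INR_leq h1; rewrite !INR_muln /= in c1.
  have c2 := INR_leq h2; rewrite !INR_addn INR_muln in c2.
  have c3 := INR_leq (leq_trans h3 hs); rewrite INR_muln S_INR in c3.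
  have c4 := INR_leq h4.
  apply: (@Ibound (INR (Iv s X)) (INR D) (INR h) (INR r) (INR F) (INR k) t) => //;
    try apply: pos_INR; lra.
set M := \max_(X in S) Iv s X.
have HM : forall X, X \in S -> (Iv s X <= M)%N.
  by move=> X hX; apply: (leq_bigmax_cond (F := Iv s)).
have HMR : INR M <= 3 * (t * t).
  rewrite /M; apply: (big_ind (fun x => INR x <= 3 * (t * t))).
  - rewrite /=; nra.
  - by move=> x y hx hy; rewrite /maxn; case: ifP.
  - exact: HI.
have cnt := INR_leq (count_total HM).
have hA0 : 0 <= A.
  have := hA 0%N; have := pos_INR (npartitions 0).
  rewrite /= sqrt_0 Rmult_0_r exp_0; lra.
have hC := C_ge.
have Hterm : forall m, (m < M.+1)%N -> INR (npartitions m) <= A * exp (Cconst * sqrt (INR M)).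
  move=> m hm; apply: Rle_trans (hA m) _.
  have hm1 : 1 <= INR (m + 1).
    rewrite INR_addn /=; have := pos_INR m; lra.
  have he : exp (Cconst * sqrt (INR m)) <= exp (Cconst * sqrt (INR M)).
    apply: exp_le_mono; apply: Rmult_le_compat_l; first lra.
    by apply: sqrt_le_1_alt; apply: INR_leq.
  have hd : A / INR (m + 1) <= A.
    rewrite /Rdiv; rewrite -{2}(Rmult_1_r A); apply: Rmult_le_compat_l => //.
    rewrite -Rinv_1; apply: Rinv_le_contravar; lra.
  have hd0 : 0 <= A / INR (m + 1).
    apply: Rmult_le_pos => //; apply: Rlt_le; apply: Rinv_0_lt_compat; lra.
  apply: Rmult_le_compat => //; apply: Rlt_le; apply: exp_pos.
have hsum := sum_INR_le Hterm.
have hfin := @final_ineq t (INR M) ht32 (pos_INR M) HMR.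
rewrite INR_muln in cnt.
rewrite S_INR in hsum.
have hn : 0 <= INR n.+1 := pos_INR _.
rewrite addn1.
move: cnt hsum hfin hn.
generalize (exp (Cconst * sqrt (INR M))) (exp (2 * Cconst * t * sqrt (1 + ln (2 * (t * t))))) => e1 e2.
move=> cnt hsum hfin hn.
apply: Rle_trans cnt _.
have hp : INR n.+1 * INR (\sum_(m < M.+1) npartitions m) <= INR n.+1 * ((INR M + 1) * (A * e1)).
  by apply: Rmult_le_compat_l.
apply: Rle_trans hp _.
have : 0 <= A * INR n.+1 by apply: Rmult_le_pos.
nra.
Qed.

End RealPart.

Theorem mainTheorem14 (A : R) (hA : HR_constant A)
  (k n : nat) (hk : 0 < k) (T : rel 'I_n)
  (hloop : loopless T) (hsc : semi_complete T)
  (hord : exists s : {perm 'I_n}, cost T s <= k) :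
  Rle (INR (num_dcuts T (dthr k))) (cut_bound A k n).
Proof.
case: hord => s hs.
exact: (main_aux hA hk hsc hs).
Qed.
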